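(* Let $\mathbb{H}_1,\mathbb{H}_2$ be Hilbert spaces (both real or both complex). Let $T\in \mathbb{L}(\mathbb{H}_1,\mathbb{H}_2)$ with $\|T\|=1$ be such that $M_T=S_{H_0}$, where $H_0$ is a finite-dimensional subspace of $\mathbb{H}_1$ with $\dim(H_0)=n$, and $\|T|_{H_0^\perp}\|<1$. Then $T$ is $n^2$-smooth if $\mathbb{H}_1,\mathbb{H}_2$ are complex, and $T$ is $\binom{n+1}{2}$-smooth if $\mathbb{H}_1,\mathbb{H}_2$ are real.
   Context: $\mathbb{L}(\mathbb{X},\mathbb{Y})$ denotes the space of bounded linear operators between Banach spaces with the operator norm. $S_{\mathbb{X}}$ is the unit sphere of $\mathbb{X}$. For $T\in\mathbb{L}(\mathbb{X},\mathbb{Y})$, the norm attainment set is $M_T=\{x\in S_{\mathbb{X}}:\|Tx\|=\|T\|\}$. For a Banach space $\mathbb{Z}$ and $z\in S_{\mathbb{Z}}$, let $J(z)=\{f\in \mathbb{Z}^*:\|f\|=1,\ f(z)=1\}$; $z$ is called $k$-smooth if $\dim \operatorname{span} J(z)=k$. An operator $T$ of norm one is $k$-smooth if it is a $k$-smooth point of the unit sphere of $\mathbb{Z}=\mathbb{L}(\mathbb{H}_1,\mathbb{H}_2)$. *)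

(* Defs.v *)
(* MathComp-Analysis normed modules over a numFieldType K.
   K will be instantiated with R : realType (real case) or R[i] (complex case). *)
From mathcomp Require Import all_boot all_order all_algebra.
From mathcomp Require Import all_classical all_reals all_analysis.
From mathcomp Require Export complex.
Import numFieldNormedType.Exports.
Import Order.TTheory GRing.Theory Num.Theory.

Set Implicit Arguments.
Unset Strict Implicit.
Unset Printing Implicit Defensive.

Local Open Scope classical_set_scope.
Local Open Scope ring_scope.

Section Defs.
Variable K : numFieldType.

Definition is_lub (S : set K) (s : K) : Prop :=
  (forall x, S x -> x <= s) /\ (forall b, (forall x, S x -> x <= b) -> s <= b).

(* ip is an inner product on V (linear in the first argument,
   conj-symmetric, where conj is the field conjugation: id on R, conjC on C)
   inducing the norm of V. Together with completeness of V
   (V : completeNormedModType K) this makes (V, ip) a Hilbert space. *)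
Definition inner_product (conj : K -> K) (V : normedModType K)
    (ip : V -> V -> K) : Prop :=
  [/\ forall a x y z, ip (a *: x + y) z = a * ip x z + ip y z,
      forall x y, ip x y = conj (ip y x)
    & forall x, ip x x = `|x| ^+ 2].

Variables V1 V2 : normedModType K.

Definition lin_map (A : V1 -> V2) : Prop :=
  forall a x y, A (a *: x + y) = a *: A x + A y.

Definition bdd_op : set (V1 -> V2) :=
  [set A | lin_map A /\ exists M : K, forall x, `|A x| <= M * `|x|].

Definition opnorm_is (A : V1 -> V2) (c : K) : Prop :=
  is_lub [set r | exists x, `|x| <= 1 /\ r = `|A x|] c.

Definition op_ball : set (V1 -> V2) :=
  [set A | bdd_op A /\ forall x, `|x| <= 1 -> `|A x| <= 1].

Definition functional := (V1 -> V2) -> K.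

(* linear functional on L(V1,V2) (only its values on L(V1,V2) matter) *)
Definition lin_functional (f : functional) : Prop :=
  forall a A B, bdd_op A -> bdd_op B ->
    f (fun x => a *: A x + B x) = a * f A + f B.

Definition J (T : V1 -> V2) : set functional :=
  [set f | [/\ lin_functional f,
               is_lub [set r | exists A, op_ball A /\ r = `|f A|] 1
             & f T = 1]].

(* g lies in the linear span of the set of functionals S
   (functionals identified when they agree on L(V1,V2)) *)
Definition in_span (S : set functional) (g : functional) : Prop :=
  exists m (s : 'I_m -> functional) (c : 'I_m -> K),
    (forall j, S (s j)) /\
    (forall A, bdd_op A -> g A = \sum_(j < m) c j * s j A).

Definition lin_indep_fam k (g : 'I_k -> functional) : Prop :=
  forall c : 'I_k -> K,
    (forall A, bdd_op A -> \sum_(i < k) c i * g i A = 0) -> forall i, c i = 0.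

Definition dim_span_is (S : set functional) (k : nat) : Prop :=
  exists g : 'I_k -> functional,
    [/\ forall i, in_span S (g i),
        lin_indep_fam g
      & forall f, S f -> in_span [set g i | i in [set: 'I_k]] f].

Definition k_smooth (T : V1 -> V2) (k : nat) : Prop :=
  [/\ bdd_op T, opnorm_is T 1 & dim_span_is (J T) k].

Definition span_vec n (e : 'I_n -> V1) : set V1 :=
  [set x | exists c : 'I_n -> K, x = \sum_(i < n) c i *: e i].

Definition vec_indep n (e : 'I_n -> V1) : Prop :=
  forall c : 'I_n -> K, \sum_(i < n) c i *: e i = 0 -> forall i, c i = 0.

Definition orth_compl (ip : V1 -> V1 -> K) (H : set V1) : set V1 :=
  [set y | forall x, H x -> ip x y = 0].

(* Hypotheses of Theorem 2.1: H1 = (V1,ip1), H2 = (V2,ip2) Hilbert spaces,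
   T in L(H1,H2), ||T|| = 1, H0 = span e with dim H0 = n (e a basis),
   M_T = S_{H0}, and ||T restricted to H0^perp|| < 1. *)
Definition thm2p1_hyp (conj : K -> K) (ip1 : V1 -> V1 -> K)
    (ip2 : V2 -> V2 -> K) (T : V1 -> V2) n (e : 'I_n -> V1) : Prop :=
  [/\ inner_product conj ip1 /\ inner_product conj ip2,
      bdd_op T /\ opnorm_is T 1,
      vec_indep e,
      [set x | `|x| = 1 /\ `|T x| = 1] = [set x | span_vec e x /\ `|x| = 1]
    & exists s, s < 1 /\
        is_lub [set r | exists y, orth_compl ip1 (span_vec e) y /\
                                  `|y| <= 1 /\ r = `|T y|] s].

End Defs.

(* Main.v *)
Require Import Defs.
From mathcomp Require Import all_boot all_order all_algebra.
From mathcomp Require Import all_classical all_reals all_analysis.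
From mathcomp Require Import complex.
From mathcomp Require Import ring lra.
Import numFieldNormedType.Exports.
Import Order.TTheory GRing.Theory Num.Theory.
Local Open Scope ring_scope.
Local Open Scope classical_set_scope.

Set Implicit Arguments.
Unset Strict Implicit.

Section Ops.
Variables (K : numFieldType) (V1 V2 : normedModType K).

Lemma lin0 (A : V1 -> V2) : lin_map A -> A 0 = 0.
Proof.
move=> hA; have h := hA 1 0 0; rewrite scaler0 addr0 scale1r in h.
by apply: (@addrI _ (A 0)); rewrite addr0 -h.
Qed.
Lemma linD (A : V1 -> V2) x y : lin_map A -> A (x + y) = A x + A y.
Proof. move=> hA; have h := hA 1 x y; by rewrite !scale1r in h. Qed.
Lemma linZ (A : V1 -> V2) a x : lin_map A -> A (a *: x) = a *: A x.
Proof. by move=> hA; have h := hA a x 0; by rewrite !addr0 lin0 ?addr0 in h. Qed.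
Lemma linN (A : V1 -> V2) x : lin_map A -> A (- x) = - A x.
Proof. by move=> hA; rewrite -scaleN1r linZ // scaleN1r. Qed.
Lemma linB (A : V1 -> V2) x y : lin_map A -> A (x - y) = A x - A y.
Proof. by move=> hA; rewrite linD // linN. Qed.
Lemma lin_sum (A : V1 -> V2) I (r : seq I) (c : I -> K) (f : I -> V1) :
  lin_map A -> A (\sum_(i <- r) c i *: f i) = \sum_(i <- r) c i *: A (f i).
Proof.
move=> hA; elim: r => [|i r IH]; first by rewrite !big_nil lin0.
by rewrite !big_cons linD // linZ // IH.
Qed.

Lemma bddE (A : V1 -> V2) : bdd_op A ->
  [/\ lin_map A & exists M, 0 <= M /\ forall x, `|A x| <= M * `|x|].
Proof.
case=> hl [M hM]; split=> //; exists `|M|; split=> // x.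
have h := hM x.
have h0 : 0 <= M * `|x| := le_trans (normr_ge0 _) h.
by rewrite -[X in _ <= _ * X]normr_id -normrM ger0_norm.
Qed.

Lemma bdd_comb a (A B : V1 -> V2) : bdd_op A -> bdd_op B ->
  bdd_op (fun x => a *: A x + B x).
Proof.
move=> /bddE [lA [MA [MA0 hA]]] /bddE [lB [MB [MB0 hB]]]; split.
  move=> b x y; rewrite (lA b) (lB b) scalerDr scalerDr scalerA scalerA mulrC.
  by rewrite -!addrA; congr (_ + _); rewrite addrCA.
exists (`|a| * MA + MB) => x.
apply: le_trans (ler_normD _ _) _; rewrite normrZ mulrDl -mulrA.
by apply: lerD => //; apply: ler_wpM2l.
Qed.

Lemma bdd0 : bdd_op (fun _ : V1 => (0 : V2)).
Proof.
split; first by move=> a x y; rewrite scaler0 addr0.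
by exists 0 => x; rewrite normr0 mul0r.
Qed.

Lemma bdd_sum I (r : seq I) (c : I -> K) (S : I -> V1 -> V2) :
  (forall i, bdd_op (S i)) -> bdd_op (fun x => \sum_(i <- r) c i *: S i x).
Proof.
move=> hS; elim: r => [|i r IH].
  have -> : (fun x : V1 => \sum_(i <- [::]) c i *: S i x) = fun _ => 0
    by apply: funext => x; rewrite big_nil.
  exact: bdd0.
have -> : (fun x : V1 => \sum_(j <- i :: r) c j *: S j x) =
   fun x => c i *: S i x + \sum_(j <- r) c j *: S j x
  by apply: funext => x; rewrite big_cons.
exact: bdd_comb.
Qed.

Lemma f0 (f : functional V1 V2) : lin_functional f -> f (fun _ => 0) = 0.
Proof.
move=> hf; have h := hf 1 _ _ bdd0 bdd0.
have e : (fun x : V1 => 1 *: (0 : V2) + 0) = fun _ => 0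
  by apply: funext => x; rewrite scaler0 addr0.
rewrite e mul1r in h.
by apply: (@addrI _ (f (fun _ => 0))); rewrite addr0 -h.
Qed.

Lemma fZ (f : functional V1 V2) a A : lin_functional f -> bdd_op A ->
  f (fun x => a *: A x) = a * f A.
Proof.
move=> hf hA; have h := hf a _ _ hA bdd0.
have e : (fun x : V1 => a *: A x + 0) = fun x => a *: A x
  by apply: funext => x; rewrite addr0.
by rewrite e f0 // addr0 in h.
Qed.

Lemma f_sum (f : functional V1 V2) I (r : seq I) (c : I -> K) (S : I -> V1 -> V2) :
  lin_functional f -> (forall i, bdd_op (S i)) ->
  f (fun x => \sum_(i <- r) c i *: S i x) = \sum_(i <- r) c i * f (S i).
Proof.
move=> hf hS; elim: r => [|i r IH].
  have -> : (fun x : V1 => \sum_(i <- [::]) c i *: S i x) = fun _ => 0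
    by apply: funext => x; rewrite big_nil.
  by rewrite big_nil f0.
have -> : (fun x : V1 => \sum_(j <- i :: r) c j *: S j x) =
   fun x => c i *: S i x + \sum_(j <- r) c j *: S j x
  by apply: funext => x; rewrite big_cons.
by rewrite (hf (c i)) // ?IH ?big_cons //; exact: bdd_sum.
Qed.

Lemma in_span_mem (S : set (functional V1 V2)) g : S g -> in_span S g.
Proof.
move=> Sg; exists 1%N, (fun _ => g), (fun _ => 1); split=> // A _.
by rewrite big_ord1 mul1r.
Qed.

Lemma in_span_ext (S : set (functional V1 V2)) g h : in_span S g ->
  (forall A, bdd_op A -> h A = g A) -> in_span S h.
Proof.
move=> [m [s [c [Ss hs]]]] e; exists m, s, c; split=> // A hA.
by rewrite e // hs.
Qed.

Lemma in_span_zero (S : set (functional V1 V2)) g :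
  (forall A, bdd_op A -> g A = 0) -> in_span S g.
Proof.
move=> e; exists 0%N, (fun _ => g), (fun _ => 0); split; first by case.
by move=> A hA; rewrite big_ord0 e.
Qed.

Lemma in_span_comb (S : set (functional V1 V2)) a g1 g2 :
  in_span S g1 -> in_span S g2 -> in_span S (fun A => a * g1 A + g2 A).
Proof.
move=> [m1 [s1 [c1 [S1 h1]]]] [m2 [s2 [c2 [S2 h2]]]].
exists (m1 + m2)%N, (fun i => match fintype.split i with inl j => s1 j | inr j => s2 j end),
  (fun i => match fintype.split i with inl j => a * c1 j | inr j => c2 j end).
split.
  by move=> i; case: (fintype.split i).
move=> A hA; rewrite big_split_ord /= h1 // h2 // mulr_sumr.
congr (_ + _); apply: eq_bigr => j _.
  by rewrite (unsplitK (inl _ j)) mulrA.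
by rewrite (unsplitK (inr _ j)).
Qed.

Lemma in_span_sum (S : set (functional V1 V2)) I (r : seq I) (c : I -> K) g :
  (forall i, in_span S (g i)) -> in_span S (fun A => \sum_(i <- r) c i * g i A).
Proof.
move=> hg; elim: r => [|i r IH].
  by apply: in_span_zero => A _; rewrite big_nil.
apply: (in_span_ext (in_span_comb (c i) (hg i) IH)) => A _.
by rewrite big_cons.
Qed.

Lemma dim_from_basis T k (g : 'I_k -> functional V1 V2) (S : 'I_k -> V1 -> V2) :
  (forall p, lin_functional (g p)) -> (forall p, bdd_op (S p)) ->
  (forall p q, g p (S q) = (p == q)%:R) ->
  (forall p, in_span (J T) (g p)) ->
  (forall f A, J T f -> bdd_op A -> (forall p, g p A = 0) -> f A = 0) ->
  dim_span_is (J T) k.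
Proof.
move=> gl Sb gS gJ key; exists g; split=> //.
  move=> c hc i; have := hc (S i) (Sb i).
  rewrite (bigD1 i) //= gS eqxx mulr1 big1 ?addr0 // => j /negbTE ji.
  by rewrite gS ji mulr0.
move=> f Jf; have [fl _ _] := Jf.
exists k, g, (fun p => f (S p)); split; first by move=> j; exists j.
move=> A hA.
set B := fun x => (-1) *: (fun y => \sum_(p < k) g p A *: S p y) x + A x.
have bs : bdd_op (fun y => \sum_(p < k) g p A *: S p y) by exact: bdd_sum.
have hB : bdd_op B by exact: bdd_comb.
have fB : f B = 0.
  apply: key => // q; rewrite /B (gl q (-1)) // f_sum //.
  rewrite (bigD1 q) //= gS eqxx mulr1 big1 ?addr0 ?mulN1r ?addNr // => j /negbTE jq.
  by rewrite gS eq_sym jq mulr0.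
rewrite /B (fl (-1)) // f_sum // mulN1r in fB.
have e : \sum_(p < k) f (S p) * g p A = \sum_(p < k) g p A * f (S p)
  by apply: eq_bigr => p _; rewrite mulrC.
by rewrite e; apply/eqP; rewrite -subr_eq0 addrC fB.
Qed.

End Ops.

Section Conj.
Variables (K : numFieldType) (conj : K -> K).
Hypothesis conjD : forall a b, conj (a + b) = conj a + conj b.
Hypothesis conjM : forall a b, conj (a * b) = conj a * conj b.
Hypothesis conjK : forall a, conj (conj a) = a.
Hypothesis conjN2 : forall a, a * conj a = `|a| ^+ 2.
Hypothesis conjR : forall a, a + conj a \is Num.real.

Lemma conj0 : conj 0 = 0.
Proof.
have h := conjD 0 0; rewrite addr0 in h.
by apply: (@addrI _ (conj 0)); rewrite addr0 -h.
Qed.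

Lemma conjNeg a : conj (- a) = - conj a.
Proof.
apply: (@addrI _ (conj a)); rewrite -conjD !subrr; exact: conj0.
Qed.

Lemma conj_norm a : `|conj a| = `|a|.
Proof.
apply/eqP; rewrite -(@eqrXn2 _ 2) //.
by rewrite -conjN2 conjK mulrC conjN2.
Qed.

Lemma conj_ge0 r : 0 <= r -> conj r = r.
Proof.
move=> r0; have [->|rn0] := eqVneq r 0; first exact: conj0.
apply: (mulfI rn0); rewrite conjN2 ger0_norm //.
Qed.

Lemma conj_le a : a + conj a <= `|a| *+ 2.
Proof.
apply: le_trans (real_ler_norm (conjR a)) _.
by apply: le_trans (ler_normD _ _) _; rewrite conj_norm mulr2n.
Qed.

Section IP.
Variables (V : normedModType K) (ip : V -> V -> K).
Hypothesis Hip : inner_product conj ip.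

Lemma ipE a x y z : ip (a *: x + y) z = a * ip x z + ip y z.
Proof. by case: Hip. Qed.
Lemma ipC x y : ip x y = conj (ip y x).
Proof. by case: Hip. Qed.
Lemma ipxx x : ip x x = `|x| ^+ 2.
Proof. by case: Hip. Qed.

Lemma ip0l z : ip 0 z = 0.
Proof.
have h := ipE 1 0 0 z; rewrite scaler0 addr0 mul1r in h.
by apply: (@addrI _ (ip 0 z)); rewrite addr0 -h.
Qed.
Lemma ip0r z : ip z 0 = 0.
Proof. by rewrite ipC ip0l conj0. Qed.
Lemma ipDl x y z : ip (x + y) z = ip x z + ip y z.
Proof. by rewrite -[x]scale1r ipE mul1r scale1r. Qed.
Lemma ipZl a x z : ip (a *: x) z = a * ip x z.
Proof. by rewrite -[a *: x]addr0 ipE ip0l addr0. Qed.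
Lemma ipNl x z : ip (- x) z = - ip x z.
Proof. by rewrite -scaleN1r ipZl mulN1r. Qed.
Lemma ipBl x y z : ip (x - y) z = ip x z - ip y z.
Proof. by rewrite ipDl ipNl. Qed.
Lemma ipDr x y z : ip z (x + y) = ip z x + ip z y.
Proof. by rewrite ipC ipDl conjD -!ipC. Qed.
Lemma ipZr a x z : ip z (a *: x) = conj a * ip z x.
Proof. by rewrite ipC ipZl conjM -ipC. Qed.
Lemma ipNr x z : ip z (- x) = - ip z x.
Proof. by rewrite ipC ipNl conjNeg -ipC. Qed.
Lemma ipBr x y z : ip z (x - y) = ip z x - ip z y.
Proof. by rewrite ipDr ipNr. Qed.

Lemma ip_suml I (r : seq I) (c : I -> K) (f : I -> V) z :
  ip (\sum_(i <- r) c i *: f i) z = \sum_(i <- r) c i * ip (f i) z.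
Proof.
elim: r => [|i r IH]; first by rewrite !big_nil ip0l.
by rewrite !big_cons ipDl ipZl IH.
Qed.

Lemma ip_sumr I (r : seq I) (c : I -> K) (f : I -> V) z :
  ip z (\sum_(i <- r) c i *: f i) = \sum_(i <- r) conj (c i) * ip z (f i).
Proof.
elim: r => [|i r IH]; first by rewrite !big_nil ip0r.
by rewrite !big_cons ipDr ipZr IH.
Qed.

Lemma normD2 x y : `|x + y| ^+ 2 = `|x| ^+ 2 + `|y| ^+ 2 + (ip y x + conj (ip y x)).
Proof.
rewrite -!ipxx ipDl !ipDr [ip x y]ipC.
by set a := ip x x; set b := ip y y; set c := ip y x; set d := conj c; ring.
Qed.

Lemma CS x y : `|ip x y| <= `|x| * `|y|.
Proof.
have [->|yn0] := eqVneq y 0; first by rewrite ip0r normr0 normr0 mulr0.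
have ny0 : `|y| != 0 by rewrite normr_eq0.
set p := ip x y.
set l := p / `|y| ^+ 2.
have h : 0 <= `|x - l *: y| ^+ 2 by rewrite exprn_ge0.
rewrite -ipxx ipBl !ipBr !ipZl !ipZr ipxx ipxx -/p [ip y x]ipC -/p in h.
have cl : conj l = conj p / `|y| ^+ 2.
  have h0 : 0 <= (`|y| ^+ 2)^-1 by rewrite invr_ge0 exprn_ge0.
  by rewrite /l conjM (conj_ge0 h0).
rewrite cl in h.
have e : `|x| ^+ 2 - conj p / `|y| ^+ 2 * p - (l * conj p - l * (conj p / `|y| ^+ 2 * `|y| ^+ 2))
   = `|x| ^+ 2 - (p * conj p) / `|y| ^+ 2.
  by rewrite /l; field.
rewrite e conjN2 subr_ge0 ler_pdivrMr ?exprn_gt0 ?normr_gt0 // in h.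
rewrite -(@ler_sqr _ (`|p|)) ?nnegrE ?mulr_ge0 // exprMn //.
Qed.

End IP.

Lemma helper0 (a b : K) : 0 <= a -> 0 <= b -> (forall t, 0 < t -> a <= t * b) -> a = 0.
Proof.
move=> a0 b0 h; have [//|an0] := eqVneq a 0.
have ap : 0 < a by rewrite lt_def an0 a0.
have b1 : 0 < b + 1 by apply: ltr_wpDl.
have := h (a / (b + 1)) (divr_gt0 ap b1).
rewrite mulrAC ler_pdivlMr // mulrDr mulr1 gerDl.
by move=> /(lt_le_trans ap); rewrite ltxx.
Qed.

Lemma id_est (a s V t M : K) : 1 - s != 0 ->
  1 + (M ^+ 2 *+ 2 / (1 - s)) * t ^+ 2 - (a + (s * V + t * M) ^+ 2 + (t * M * V) *+ 2)
  = (1 - (a + V ^+ 2)) + (1 + s) * ((1 - s) * V - t * M) ^+ 2 / (1 - s).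
Proof. by move=> h; field. Qed.

Section GramSec.
Variables (V : normedModType K) (ip : V -> V -> K).
Hypothesis Hip : inner_product conj ip.

Definition gram n (f : 'I_n -> V) : 'M[K]_n := \matrix_(i, j) ip (f i) (f j).
Definition coef n (f : 'I_n -> V) x k := \sum_(m < n) ip x (f m) * invmx (gram f) m k.
Definition dualv n (f : 'I_n -> V) l := \sum_(m < n) invmx (gram f) l m *: f m.

Lemma sum_delta n (F : 'I_n -> K) i : \sum_(m < n) F m * (m == i)%:R = F i.
Proof.
rewrite (bigD1 i) //= eqxx mulr1 big1 ?addr0 // => j /negbTE ->; exact: mulr0.
Qed.

Lemma gram_unit n (f : 'I_n -> V) : vec_indep f -> gram f \in unitmx.
Proof.
move=> hf; rewrite -row_free_unit -kermx_eq0; apply/eqP/row_matrixP => i.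
rewrite row0; set c := row i (kermx (gram f)).
have cG : c *m gram f = 0 by rewrite -row_mul mulmx_ker row0.
set w := \sum_(j < n) c 0 j *: f j.
have hw : forall i', ip w (f i') = 0.
  move=> i'; rewrite /w (ip_suml Hip).
  have e : \sum_(j < n) c 0 j * ip (f j) (f i') = (c *m gram f) 0 i'
    by rewrite [RHS]mxE; apply: eq_bigr => j _; rewrite [gram f _ _]mxE.
  by rewrite e cG mxE.
have w0 : w = 0.
  apply/eqP; rewrite -normr_eq0 -sqrf_eq0 -(ipxx Hip).
  by rewrite {2}/w (ip_sumr Hip) big1 // => j _; rewrite hw mulr0.
by apply/rowP => j; rewrite [RHS]mxE; exact: (hf (fun j => c 0 j) w0 j).
Qed.

Lemma coef_orth n (f : 'I_n -> V) x i : vec_indep f ->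
  ip (x - \sum_(k < n) coef f x k *: f k) (f i) = 0.
Proof.
move=> hf; rewrite (ipBl Hip) (ip_suml Hip) /coef.
have -> : \sum_(k < n) (\sum_(m < n) ip x (f m) * invmx (gram f) m k) * ip (f k) (f i)
   = \sum_(m < n) ip x (f m) * (invmx (gram f) *m gram f) m i.
  under eq_bigr => k _ do rewrite mulr_suml.
  rewrite exchange_big /=; apply: eq_bigr => m _; rewrite mxE mulr_sumr.
  by apply: eq_bigr => k _; rewrite [gram f _ _]mxE mulrA.
by rewrite mulVmx ?gram_unit // (eq_bigr (fun m => ip x (f m) * (m == i)%:R)) ?sum_delta ?subrr // => m _; rewrite mxE.
Qed.

Lemma coef_f n (f : 'I_n -> V) i k : vec_indep f -> coef f (f i) k = (i == k)%:R.
Proof.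
move=> hf; rewrite /coef.
have -> : \sum_(m < n) ip (f i) (f m) * invmx (gram f) m k = (gram f *m invmx (gram f)) i k.
  by rewrite mxE; apply: eq_bigr => m _; rewrite mxE.
by rewrite mulmxV ?gram_unit // mxE.
Qed.

Lemma coef_lin n (f : 'I_n -> V) a x y k :
  coef f (a *: x + y) k = a * coef f x k + coef f y k.
Proof.
rewrite /coef mulr_sumr -big_split /=; apply: eq_bigr => m _.
by rewrite (ipE Hip) mulrDl mulrA.
Qed.

Lemma coef_bound n (f : 'I_n -> V) k : exists M, 0 <= M /\ forall x, `|coef f x k| <= M * `|x|.
Proof.
exists (\sum_(m < n) `|f m| * `|invmx (gram f) m k|); split.
  by apply: sumr_ge0 => m _; apply: mulr_ge0.
move=> x; rewrite /coef mulr_suml; apply: le_trans (ler_norm_sum _ _ _) _.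
apply: ler_sum => m _; rewrite normrM mulrAC ler_wpM2r //.
by rewrite mulrC; exact: (CS Hip).
Qed.

Lemma dualv_ip n (f : 'I_n -> V) l j : vec_indep f -> ip (dualv f l) (f j) = (l == j)%:R.
Proof.
move=> hf; rewrite /dualv (ip_suml Hip).
have -> : \sum_(m < n) invmx (gram f) l m * ip (f m) (f j) = (invmx (gram f) *m gram f) l j.
  by rewrite mxE; apply: eq_bigr => m _; rewrite mxE.
by rewrite mulVmx ?gram_unit // mxE.
Qed.

End GramSec.

Lemma bddZ (V1 V2 : normedModType K) a (A : V1 -> V2) : bdd_op A -> bdd_op (fun x => a *: A x).
Proof.
move=> hA; have := bdd_comb a hA (@bdd0 _ V1 V2).
have -> : (fun x => a *: A x + 0) = (fun x => a *: A x) by apply: funext => x; rewrite addr0.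
by [].
Qed.

Lemma in_span_scale (V1 V2 : normedModType K) (S : set (functional V1 V2)) a g :
  in_span S g -> in_span S (fun A => a * g A).
Proof.
move=> hg; have h0 : in_span S (fun _ => 0) by apply: in_span_zero.
apply: (in_span_ext (in_span_comb a hg h0)) => A _; by rewrite addr0.
Qed.

Section Main.
Variables (V1 V2 : normedModType K) (ip1 : V1 -> V1 -> K) (ip2 : V2 -> V2 -> K)
  (T : V1 -> V2) (n : nat) (e : 'I_n -> V1) (s : K).
Hypotheses (Hip1 : inner_product conj ip1) (Hip2 : inner_product conj ip2)
  (HTb : bdd_op T) (HT1 : opnorm_is T 1) (Hind : vec_indep e)
  (HM : [set x | `|x| = 1 /\ `|T x| = 1] = [set x | span_vec e x /\ `|x| = 1])
  (Hs1 : s < 1)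
  (Hs : is_lub [set r | exists y, orth_compl ip1 (span_vec e) y /\
                                  `|y| <= 1 /\ r = `|T y|] s).

Local Notation H0 := (span_vec e).
Local Notation Hp := (orth_compl ip1 (span_vec e)).

Lemma lT : lin_map T. Proof. by case: HTb. Qed.

Lemma scale_bound (A : V1 -> V2) (P : V1 -> Prop) c : lin_map A ->
  (forall a x, P x -> P (a *: x)) ->
  (forall x, P x -> `|x| <= 1 -> `|A x| <= c) -> forall x, P x -> `|A x| <= c * `|x|.
Proof.
move=> lA PZ hc x Px.
have [->|xn0] := eqVneq x 0; first by rewrite lin0 // !normr0 mulr0.
have nx : `|x| != 0 by rewrite normr_eq0.
set y := `|x|^-1 *: x.
have ny : `|y| = 1 by rewrite /y normrZ normfV normr_id mulVf.
have ex : x = `|x| *: y by rewrite /y scalerA mulfV // scale1r.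
rewrite {1}ex linZ // normrZ normr_id mulrC ler_wpM2r //.
by apply: hc; [exact: PZ | rewrite ny].
Qed.

Lemma T_le1 x : `|x| <= 1 -> `|T x| <= 1.
Proof. by move=> hx; case: HT1 => ub _; apply: ub; exists x. Qed.

Lemma Tle x : `|T x| <= `|x|.
Proof.
have := @scale_bound T (fun _ => True) 1 lT (fun _ _ _ => I) (fun x _ hx => T_le1 hx) x I.
by rewrite mul1r.
Qed.

Lemma HpZ a v : Hp v -> Hp (a *: v).
Proof. by move=> hv w Hw; rewrite (ipZr Hip1) hv // mulr0. Qed.

Lemma Hp0 : Hp 0.
Proof. by move=> w _; rewrite (ip0r Hip1). Qed.

Lemma s_ge0 : 0 <= s.
Proof.
case: Hs => ub _; apply: ub; exists 0; split; first exact: Hp0.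
by rewrite normr0 lin0 ?normr0 //; exact: lT.
Qed.

Lemma Ts v : Hp v -> `|T v| <= s * `|v|.
Proof.
apply: (@scale_bound T Hp s lT HpZ) => x Hx hx.
by case: Hs => ub _; apply: ub; exists x.
Qed.

Lemma span0 : H0 0.
Proof. by exists (fun _ => 0); rewrite big1 // => i _; rewrite scale0r. Qed.

Lemma spanZ a x : H0 x -> H0 (a *: x).
Proof.
case=> c ->; exists (fun i => a * c i); rewrite scaler_sumr.
by apply: eq_bigr => i _; rewrite scalerA.
Qed.

Lemma spanD x y : H0 x -> H0 y -> H0 (x + y).
Proof.
case=> c ->; case=> d ->; exists (fun i => c i + d i); rewrite -big_split.
by apply: eq_bigr => i _; rewrite scalerDl.
Qed.

Lemma span_e i : H0 (e i).
Proof.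
exists (fun j => (j == i)%:R); rewrite (bigD1 i) //= eqxx scale1r big1 ?addr0 //.
by move=> j /negbTE ->; rewrite scale0r.
Qed.

Lemma Tiso u : H0 u -> `|T u| = `|u|.
Proof.
move=> Hu.
have key : forall y, H0 y -> `|y| = 1 -> `|T y| = 1.
  move=> y Hy ny.
  have : [set x | span_vec e x /\ `|x| = 1] y by [].
  by rewrite -HM; case.
have [->|un0] := eqVneq u 0; first by rewrite lin0 ?normr0 //; exact: lT.
have nu : `|u| != 0 by rewrite normr_eq0.
set y := `|u|^-1 *: u.
have ny : `|y| = 1 by rewrite /y normrZ normfV normr_id mulVf.
have ex : u = `|u| *: y by rewrite /y scalerA mulfV // scale1r.
rewrite {1}ex linZ ?normrZ ?normr_id ?key ?mulr1 //; last exact: lT.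
exact: spanZ.
Qed.

Lemma Tperp u v : H0 u -> Hp v -> ip2 (T v) (T u) = 0.
Proof.
move=> Hu Hv.
have hvu : ip1 v u = 0 by rewrite (ipC Hip1) Hv // conj0.
set z := ip2 (T v) (T u).
suff : `|z| ^+ 2 *+ 2 = 0.
  by move/eqP; rewrite mulrn_eq0 /= sqrf_eq0 normr_eq0 => /eqP.
apply: (@helper0 _ (`|z| ^+ 2 * `|v| ^+ 2)).
- by rewrite mulrn_wge0 // exprn_ge0.
- by rewrite mulr_ge0 // exprn_ge0.
move=> t t0.
set eps := t * conj z.
have h1 := Tle (u + eps *: v).
have h2 : `|T (u + eps *: v)| ^+ 2 <= `|u + eps *: v| ^+ 2.
  by rewrite lerXn2r ?nnegrE.
rewrite (linD _ _ lT) (linZ _ _ lT) (normD2 Hip2) (normD2 Hip1) in h2.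
rewrite (ipZl Hip1) hvu mulr0 conj0 addr0 (ipZl Hip2) -/z Tiso // in h2.
have ez : eps * z = t * `|z| ^+ 2 by rewrite /eps -mulrA [conj z * z]mulrC conjN2.
have hz0 : 0 <= t * `|z| ^+ 2 by apply: mulr_ge0; [exact: ltW | exact: exprn_ge0].
rewrite ez (conj_ge0 hz0) !normrZ in h2.
rewrite conj_norm (gtr0_norm t0) addr0 -addrA lerD2l in h2.
have h3 : t * (`|z| ^+ 2 *+ 2) <= t * (t * (`|z| ^+ 2 * `|v| ^+ 2)).
  apply: le_trans _ (le_trans h2 _).
    rewrite mulr2n mulrDr lerDr; apply: exprn_ge0.
    by apply: mulr_ge0; [apply: mulr_ge0; [exact: ltW|exact: normr_ge0]|exact: normr_ge0].
  by rewrite [X in _ <= X](_ : _ = (t * `|z| * `|v|) ^+ 2) //; ring.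
by rewrite ler_pM2l in h3.
Qed.

Lemma proj x : exists u v, [/\ x = u + v, H0 u & Hp v].
Proof.
set u := \sum_(k < n) coef ip1 e x k *: e k.
exists u, (x - u); split.
- by rewrite addrC subrK.
- by exists (coef ip1 e x).
move=> w [a ->]; rewrite (ip_suml Hip1) big1 // => i _.
by rewrite (ipC Hip1) (coef_orth Hip1) // conj0 mulr0.
Qed.

Lemma est (B : V1 -> V2) M t x : bdd_op B -> 0 <= M ->
  (forall y, `|B y| <= M * `|y|) ->
  (forall u, H0 u -> ip2 (B u) (T u) = 0) -> 0 <= t -> `|x| <= 1 ->
  `|t *: B x + T x| <= 1 + (M ^+ 2 *+ 2 / (1 - s)) * t ^+ 2.
Proof.
move=> hB M0 hM hBu t0 hx.
have lB : lin_map B by case: hB.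
have s0 := s_ge0.
have s1 : 0 < 1 - s by rewrite subr_gt0.
case: (proj x) => u [v [ex Hu Hv]].
have hvu : ip1 v u = 0 by rewrite (ipC Hip1) Hv // conj0.
have nx : `|x| ^+ 2 = `|u| ^+ 2 + `|v| ^+ 2.
  by rewrite ex (normD2 Hip1) hvu conj0 !addr0.
have x1 : `|x| ^+ 2 <= 1 by rewrite exprn_ile1.
have nu1 : `|u| <= 1.
  have : `|u| ^+ 2 <= 1 ^+ 2.
    by rewrite expr1n; apply: le_trans x1; rewrite nx lerDl exprn_ge0.
  by rewrite ler_sqr ?nnegrE.
set V := `|v|.
have V0 : 0 <= V by exact: normr_ge0.
have eTx : T x = T u + T v by rewrite ex linD //; exact: lT.
have eBx : B x = B u + B v by rewrite ex linD.
set w := T v + t *: B x.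
have ey : t *: B x + T x = T u + w by rewrite eTx addrC -addrA.
have ipw : ip2 w (T u) = t * ip2 (B v) (T u).
  by rewrite /w (ipDl Hip2) Tperp // add0r (ipZl Hip2) eBx (ipDl Hip2) hBu // add0r.
set z := t * ip2 (B v) (T u).
have hz : z + conj z <= (t * M * V) *+ 2.
  apply: le_trans (conj_le z) _; rewrite lerMn2r /=.
  rewrite /z normrM (ger0_norm t0) -mulrA ler_wpM2l //.
  apply: le_trans (CS Hip2 _ _) _; rewrite Tiso // -[X in _ <= X]mulr1.
  by apply: ler_pM => //; exact: hM.
have hBx : `|B x| <= M.
  by apply: le_trans (hM x) _; rewrite -[X in _ <= X]mulr1 ler_wpM2l.
have hw : `|w| <= s * V + t * M.
  apply: le_trans (ler_normD _ _) _; apply: lerD; first exact: Ts.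
  by rewrite normrZ (ger0_norm t0) ler_wpM2l.
have hw2 : `|w| ^+ 2 <= (s * V + t * M) ^+ 2.
  by rewrite lerXn2r ?nnegrE // addr_ge0 // mulr_ge0.
have hy2 : `|t *: B x + T x| ^+ 2 <= `|u| ^+ 2 + (s * V + t * M) ^+ 2 + (t * M * V) *+ 2.
  by rewrite ey (normD2 Hip2) ipw -/z Tiso // lerD // lerD.
set c := 1 + (M ^+ 2 *+ 2 / (1 - s)) * t ^+ 2.
have hU : `|u| ^+ 2 + (s * V + t * M) ^+ 2 + (t * M * V) *+ 2 <= c.
  rewrite -subr_ge0.
  have -> : c - (`|u| ^+ 2 + (s * V + t * M) ^+ 2 + (t * M * V) *+ 2) =
     (1 - `|x| ^+ 2) + (1 + s) * ((1 - s) * V - t * M) ^+ 2 / (1 - s).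
    by rewrite nx /c id_est // lt0r_neq0.
  apply: addr_ge0; first by rewrite subr_ge0.
  apply: divr_ge0; last exact: ltW.
  apply: mulr_ge0; first by apply: addr_ge0.
  have re : (1 - s) * V - t * M \is Num.real.
    by apply: rpredB; apply: rpredM; apply: ger0_real => //; exact: ltW.
  by rewrite -(real_normK re) exprn_ge0.
have c1 : 1 <= c.
  rewrite /c lerDl; apply: mulr_ge0; last exact: exprn_ge0.
  by apply: divr_ge0; [rewrite mulrn_wge0 // exprn_ge0 | exact: ltW].
have cc : c <= c ^+ 2 by rewrite expr2 ler_peMr // (le_trans ler01 c1).
have := le_trans hy2 (le_trans hU cc).
by rewrite ler_sqr ?nnegrE // (le_trans ler01 c1).
Qed.

Lemma key (f : functional V1 V2) B : J T f -> bdd_op B ->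
  (forall u, H0 u -> ip2 (B u) (T u) = 0) -> f B = 0.
Proof.
case=> fl [fub _] fT hB hBu.
set z := f B.
set B' := fun x => conj z *: B x.
have hB' : bdd_op B' := bddZ (conj z) hB.
have hB'u : forall u, H0 u -> ip2 (B' u) (T u) = 0.
  by move=> u Hu; rewrite /B' (ipZl Hip2) hBu // mulr0.
have fB' : f B' = `|z| ^+ 2 by rewrite /B' fZ // mulrC conjN2.
case: (bddE hB') => lB' [M [M0 hM]].
set C := M ^+ 2 *+ 2 / (1 - s).
have s1 : 0 < 1 - s by rewrite subr_gt0.
have C0 : 0 <= C by apply: divr_ge0; [rewrite mulrn_wge0 // exprn_ge0 | exact: ltW].
suff : `|z| ^+ 2 = 0 by move/eqP; rewrite sqrf_eq0 normr_eq0 => /eqP.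
apply: (helper0 _ C0); first exact: exprn_ge0.
move=> t t0.
set c := 1 + C * t ^+ 2.
have c1 : 1 <= c by rewrite /c lerDl mulr_ge0 // exprn_ge0 // ltW.
have c0 : 0 < c := lt_le_trans ltr01 c1.
have ci : 0 <= c^-1 by rewrite invr_ge0 ltW.
set F := fun x => t *: B' x + T x.
have hF : bdd_op F := bdd_comb t hB' HTb.
set D := fun x => c^-1 *: F x.
have hD : op_ball D.
  split; first exact: bddZ.
  move=> x hx; rewrite /D normrZ (ger0_norm ci).
  rewrite mulrC ler_pdivrMr // mul1r.
  exact: (est hB' M0 hM hB'u (ltW t0) hx).
have := fub _ (ex_intro _ D (Logic.conj hD erefl)).
rewrite /D fZ // /F fl // fB' fT normrM (ger0_norm ci).
have h0 : 0 <= t * `|z| ^+ 2 + 1 by apply: addr_ge0 => //; apply: mulr_ge0; [exact: ltW|exact: exprn_ge0].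
rewrite ger0_norm // mulrC ler_pdivrMr // mul1r /c addrC lerD2l.
rewrite (expr2 t) mulrA [C * t]mulrC -mulrA ler_pM2l //; by rewrite [t * C]mulrC.
Qed.

Lemma T_ball : op_ball T.
Proof. by split=> //; exact: T_le1. Qed.

Lemma fu_J u : H0 u -> `|u| = 1 -> J T (fun A => ip2 (A u) (T u)).
Proof.
move=> Hu nu; split.
- by move=> a A B _ _ /=; rewrite (ipE Hip2).
- split.
    move=> r [A [[hA hA1] ->]]; apply: le_trans (CS Hip2 _ _) _.
    by rewrite Tiso // nu mulr1; apply: hA1; rewrite nu.
  move=> b hb; have := hb _ (ex_intro _ T (Logic.conj T_ball erefl)).
  by rewrite (ipxx Hip2) Tiso // nu expr1n normr1.
- by rewrite (ipxx Hip2) Tiso // nu expr1n.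
Qed.

Lemma Q_span x : H0 x -> in_span (J T) (fun A => ip2 (A x) (T x)).
Proof.
move=> Hx.
have [->|xn0] := eqVneq x 0.
  apply: in_span_zero => A hA; have lA : lin_map A by case: hA.
  by rewrite lin0 // (ip0l Hip2).
have nx : `|x| != 0 by rewrite normr_eq0.
set u := `|x|^-1 *: x.
have nu : `|u| = 1 by rewrite /u normrZ normfV normr_id mulVf.
have Hu : H0 u by exact: spanZ.
apply: (in_span_ext (in_span_scale (`|x| ^+ 2) (in_span_mem (fu_J Hu nu)))).
move=> A hA; have lA : lin_map A by case: hA.
have ix : 0 <= `|x|^-1 by rewrite invr_ge0.
rewrite /u linZ // linZ; last exact: lT.
rewrite (ipZl Hip2) (ipZr Hip2) (conj_ge0 ix).
by field.
Qed.

Lemma Tind : vec_indep (fun m => T (e m)).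
Proof.
move=> c hc; apply: Hind.
have hs : H0 (\sum_(i < n) c i *: e i) by exists c.
apply/eqP; rewrite -normr_eq0 -(Tiso hs) lin_sum ?hc ?normr0 //; exact: lT.
Qed.

Definition Aop k l : V1 -> V2 :=
  fun x => coef ip1 e x k *: dualv ip2 (fun m => T (e m)) l.
Arguments Aop : simpl never.

Lemma Aop_bdd k l : bdd_op (Aop k l).
Proof.
split.
  by move=> a x y; rewrite /Aop (coef_lin Hip1) scalerDl scalerA.
case: (coef_bound Hip1 e k) => M [M0 hM].
exists (M * `|dualv ip2 (fun m => T (e m)) l|) => x.
by rewrite /Aop normrZ mulrAC ler_wpM2r.
Qed.

Lemma Aop_e k l i j : ip2 (Aop k l (e i)) (T (e j)) = (i == k)%:R * (l == j)%:R.
Proof.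
rewrite /Aop (ipZl Hip2) (coef_f Hip1) //.
by rewrite (dualv_ip Hip2 (f:=fun m => T (e m))) //; exact: Tind.
Qed.

Lemma complex_case (ii : K) : conj ii = - ii -> ii * ii = -1 -> dim_span_is (J T) (n ^ 2).
Proof.
move=> hi1 hi2.
have -> : (n ^ 2)%N = #|{: 'I_n * 'I_n}| by rewrite card_prod card_ord expnS expn1.
pose ev := fun p : 'I_#|{: 'I_n * 'I_n}| => (enum_val p : 'I_n * 'I_n).
pose g := fun p => (fun A : V1 -> V2 => ip2 (A (e (ev p).1)) (T (e (ev p).2))).
pose S := fun p => Aop (ev p).1 (ev p).2.
apply: (@dim_from_basis _ _ _ _ _ g S).
- by move=> p a A B _ _; rewrite /g /= (ipE Hip2).
- by move=> p; exact: Aop_bdd.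
- move=> p q; rewrite /g /S Aop_e.
  have -> : (p == q) = (ev p == ev q) by rewrite (inj_eq enum_val_inj).
  case: (ev p) => i j; case: (ev q) => k l /=.
  rewrite xpair_eqE [l == j]eq_sym.
  by case: (i == k); case: (j == l); rewrite ?mulr1 ?mulr0.
- move=> p; set x := e (ev p).1; set y := e (ev p).2.
  have hx : H0 x by exact: span_e.
  have hy : H0 y by exact: span_e.
  have h1 := Q_span (spanD hx hy).
  have h2 := Q_span hx.
  have h3 := Q_span hy.
  have h4 := Q_span (spanD hx (spanZ ii hy)).
  have h := in_span_comb (2^-1) h1 (in_span_comb (- (1 + ii) / 2) h2
              (in_span_comb (- (1 + ii) / 2) h3 (in_span_scale (ii / 2) h4))).
  apply: (in_span_ext h) => A hA; have lA : lin_map A by case: hA.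
  rewrite /g -/x -/y.
  rewrite !(linD _ _ lA) !(linD _ _ lT) !(linZ _ _ lA) !(linZ _ _ lT).
  rewrite !(ipDl Hip2) !(ipDr Hip2) !(ipZl Hip2) !(ipZr Hip2) hi1.
  set a := ip2 (A x) (T y); set b := ip2 (A y) (T x).
  set qx := ip2 (A x) (T x); set qy := ip2 (A y) (T y).
  apply/eqP; rewrite -subr_eq0; apply/eqP.
  have -> : a - (2^-1 * (qx + a + (b + qy)) + (- (1 + ii) / 2 * qx +
     (- (1 + ii) / 2 * qy + ii / 2 * (qx + - ii * a + (ii * b + ii * (- ii * qy))))))
     = (ii * ii + 1) * (a - b + ii * qy) / 2.
    by field.
  by rewrite hi2 addNr mul0r mul0r.
- move=> f A Jf hA hg; apply: key => // u [c ->].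
  have lA : lin_map A by case: hA.
  have hij : forall i j, ip2 (A (e i)) (T (e j)) = 0.
    by move=> i j; have := hg (enum_rank (i, j)); rewrite /g /ev enum_rankK.
  rewrite lin_sum // (ip_suml Hip2) big1 // => i _.
  rewrite (lin_sum _ _ _ lT) (ip_sumr Hip2) big1 ?mulr0 // => j _.
  by rewrite hij mulr0.
Qed.

Lemma card_tri : #|{: {p : 'I_n * 'I_n | (p.2 <= p.1)%N}}| = 'C(n.+1, 2).
Proof.
rewrite card_sig -sum1_card.
rewrite (eq_bigl (fun p : 'I_n * 'I_n => predT p.1 && (p.2 <= p.1)%N)) //.
rewrite -(pair_big_dep predT (fun (i : 'I_n) (j : 'I_n) => (j <= i)%N) (fun _ _ => 1%N)) /=.
have inner : forall i : 'I_n, (\sum_(j < n | (j <= i)%N) 1 = i.+1)%N.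
  move=> i; rewrite -(big_mkord (fun j => j <= i)%N (fun _ => 1%N)).
  rewrite (eq_bigl (fun j => true && (j < i.+1)%N)) //.
  by rewrite -big_nat_widen ?ltn_ord // sum_nat_const_nat subn0 muln1.
rewrite (eq_bigr (fun i : 'I_n => i.+1)) => [|i _]; last exact: inner.
rewrite -bin2_sum big_nat_recl // add0n.
by rewrite -(big_mkord xpredT (fun i => i.+1)).
Qed.

Lemma real_case : (forall a, conj a = a) -> dim_span_is (J T) 'C(n.+1, 2).
Proof.
move=> hid.
rewrite -card_tri.
pose I := {p : 'I_n * 'I_n | (p.2 <= p.1)%N}.
pose ev := fun p : 'I_#|{: I}| => val (enum_val p : I).
pose phi := fun i j (A : V1 -> V2) => ip2 (A (e i)) (T (e j)).
pose g := fun p => (fun A : V1 -> V2 => phi (ev p).1 (ev p).2 A + phi (ev p).2 (ev p).1 A).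
pose S := fun p => if (ev p).1 == (ev p).2 then (fun x => 2^-1 *: Aop (ev p).1 (ev p).1 x)
                   else Aop (ev p).1 (ev p).2.
have evle : forall p, ((ev p).2 <= (ev p).1)%N by move=> p; rewrite /ev; case: (enum_val p).
have evinj : forall p q, (p == q) = (ev p == ev q).
  by move=> p q; rewrite /ev (inj_eq val_inj) (inj_eq enum_val_inj).
have two0 : (2 : K) != 0 by rewrite pnatr_eq0.
have cf : forall i k, coef ip1 e (e i) k = (i == k)%:R by move=> i k; exact: coef_f.
have de : forall l j, ip2 (dualv ip2 (fun m => T (e m)) l) (T (e j)) = (l == j)%:R.
  by move=> l j; apply: dualv_ip => //; exact: Tind.
apply: (@dim_from_basis _ _ _ _ _ g S).
- move=> p a A B _ _; rewrite /g /phi /= !(ipE Hip2).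
  by rewrite mulrDr -!addrA; congr (_ + _); rewrite addrCA.
- move=> p; rewrite /S; case: ifP => _; [apply: bddZ |]; exact: Aop_bdd.
- move=> p q; rewrite /g /S evinj; have := evle p; have := evle q.
  case: (ev p) => i j; case: (ev q) => k l /= lk ji.
  rewrite xpair_eqE.
  have [<-|kl] := eqVneq k l.
    rewrite /phi /= !(ipZl Hip2) !cf !de.
    rewrite [k == j]eq_sym [k == i]eq_sym [_ * (i == k)%:R]mulrC -natrM mulnb.
    by move: ((i == k) && (j == k)) => bb; field.
  rewrite /phi !Aop_e.
  have z : (j == k) && (l == i) = false.
    apply/negP => /andP [/eqP ej /eqP el]; move/eqP: kl; apply; apply: val_inj; apply/eqP.
    by rewrite eqn_leq lk andbT -ej el.
  rewrite -natrM mulnb -[(j == k)%:R * _]natrM mulnb z addr0.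
  by rewrite [l == j]eq_sym.
- move=> p; set x := e (ev p).1; set y := e (ev p).2.
  have hx : H0 x by exact: span_e.
  have hy : H0 y by exact: span_e.
  have h1 := Q_span (spanD hx hy).
  have h2 := Q_span hx.
  have h3 := Q_span hy.
  have h := in_span_comb 1 h1 (in_span_comb (-1) h2 (in_span_scale (-1) h3)).
  apply: (in_span_ext h) => A hA; have lA : lin_map A by case: hA.
  rewrite /g /phi -/x -/y.
  rewrite !(linD _ _ lA) !(linD _ _ lT).
  rewrite !(ipDl Hip2) !(ipDr Hip2).
  by set a := ip2 (A x) (T y); set b := ip2 (A y) (T x);
     set qx := ip2 (A x) (T x); set qy := ip2 (A y) (T y); ring.
- move=> f A Jf hA hg; apply: key => // u [c ->].
  have lA : lin_map A by case: hA.
  have hij : forall i j, phi i j A + phi j i A = 0.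
    move=> i j; have [le|lt] := leqP j i.
      by have := hg (enum_rank (exist _ (i, j) le : I)); rewrite /g /ev enum_rankK.
    have le : (i <= j)%N by apply: ltnW.
    by have := hg (enum_rank (exist _ (j, i) le : I)); rewrite /g /ev enum_rankK addrC.
  rewrite lin_sum // (ip_suml Hip2).
  under eq_bigr => i _ do rewrite (lin_sum _ _ _ lT) (ip_sumr Hip2) mulr_sumr.
  set Sm := \sum_(i < n) _.
  have e1 : Sm = \sum_(i < n) \sum_(j < n) c i * c j * phi j i A.
    rewrite /Sm exchange_big /=; apply: eq_bigr => i _; apply: eq_bigr => j _.
    by rewrite hid /phi mulrA [c j * c i]mulrC.
  have e2 : Sm + Sm = 0.
    rewrite {1}e1 /Sm -big_split /= big1 // => i _; rewrite -big_split /= big1 // => j _.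
    by rewrite hid /phi mulrA -mulrDr [_ + ip2 _ _]addrC hij mulr0.
  apply/eqP; move/eqP: e2; rewrite -mulr2n mulrn_eq0 /=; done.
Qed.
End Main.

End Conj.

Local Close Scope classical_set_scope.

Theorem theorem2p1 :
  (forall (R : realType) (V1 V2 : completeNormedModType R)
      (ip1 : V1 -> V1 -> R) (ip2 : V2 -> V2 -> R) (T : V1 -> V2)
      (n : nat) (e : 'I_n -> V1),
      thm2p1_hyp (fun z : R => z) ip1 ip2 T e ->
      k_smooth T 'C(n.+1, 2)) /\
  (forall (R : realType) (V1 V2 : completeNormedModType R[i])
      (ip1 : V1 -> V1 -> R[i]) (ip2 : V2 -> V2 -> R[i]) (T : V1 -> V2)
      (n : nat) (e : 'I_n -> V1),
      thm2p1_hyp (@Num.conj _) ip1 ip2 T e ->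
      k_smooth T (n ^ 2)%N).
Proof.
split.
  move=> R V1 V2 ip1 ip2 T n e [[Hip1 Hip2] [HTb HT1] Hind HM [s [Hs1 Hs]]].
  split => //.
  have cN2 : forall a : R, a * a = `|a| ^+ 2 by move=> a; rewrite real_normK ?num_real // expr2.
  have cR : forall a : R, a + a \is Num.real by move=> a; exact: num_real.
  exact: (@real_case R (fun z => z) (fun _ _ => erefl) (fun _ _ => erefl) (fun _ => erefl)
            cN2 cR _ _ _ _ _ _ _ _ Hip1 Hip2 HTb HT1 Hind HM Hs1 Hs (fun _ => erefl)).
move=> R V1 V2 ip1 ip2 T n e [[Hip1 Hip2] [HTb HT1] Hind HM [s [Hs1 Hs]]].
split => //.
have cD : forall a b : R[i], (a + b)^* = a^* + b^* by move=> a b; rewrite rmorphD.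
have cM : forall a b : R[i], (a * b)^* = a^* * b^* by move=> a b; rewrite rmorphM.
have cK : forall a : R[i], a^*^* = a by move=> a; rewrite conjCK.
have cN2 : forall a : R[i], a * a^* = `|a| ^+ 2 by move=> a; rewrite normCK.
have cR : forall a : R[i], a + a^* \is Num.real.
  move=> a; have -> : a + a^* = 'Re a * 2 by rewrite ReE mulfVK // pnatr_eq0.
  by apply: rpredM; [exact: Creal_Re | exact: realn].
have i2 : 'i * 'i = -1 :> R[i] by rewrite -expr2 sqrCi.
exact: (@complex_case _ _ cD cM cK cN2 cR _ _ _ _ _ _ _ _ Hip1 Hip2 HTb HT1 Hind HM Hs1 Hs
          'i (conjCi _) i2).
Qed.
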